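(* Let $p,q,r$ be idempotents in a unital ring $A$ with $p\perp r$ and $q\perp r$. If $\operatorname{sr}((p+r)A(q+r))=1$, then $\operatorname{sr}(pAq)=1$.
   Context: Idempotents $e,f$ are orthogonal, $e\perp f$, if $ef=fe=0$. For idempotents $p,q$ in a unital ring $A$, $\operatorname{sr}(pAq)=1$ means: whenever $a\in pAq$, $x\in qAp$, $b\in pAp$ satisfy $ax+b=p$, there exist $y\in pAq$, $z\in qAp$ with $(a+by)z=p$. *)

(* Defs.v *)
From mathcomp Require Import all_boot all_algebra.
Set Implicit Arguments. Unset Strict Implicit. Unset Printing Implicit Defensive.
Import GRing.Theory.
Local Open Scope ring_scope.

Definition idem {A : pzRingType} (e : A) : Prop := e * e = e.

Definition orth {A : pzRingType} (e f : A) : Prop := e * f = 0 /\ f * e = 0.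

Definition in_corner {A : pzRingType} (p q a : A) : Prop := a = p * a * q.

Definition sr1 {A : pzRingType} (p q : A) : Prop :=
  forall a x b : A, in_corner p q a -> in_corner q p x -> in_corner p p b ->
    a * x + b = p ->
    exists y z : A, in_corner p q y /\ in_corner q p z /\ (a + b * y) * z = p.

(* Main.v *)
Require Import Defs.
From mathcomp Require Import all_boot all_algebra.
Local Open Scope ring_scope.
Import GRing.Theory.

Theorem lemma4 (A : pzRingType) (p q r : A) :
  idem p -> idem q -> idem r ->
  orth p r -> orth q r ->
  sr1 (p + r) (q + r) -> sr1 p q.
Proof.
rewrite /idem /orth /sr1 /in_corner.
move=> pp qq rr [pr rp] [qr rq] H a x b Ha Hx Hb Hab.
have pa : p * a = a by rewrite Ha !mulrA pp.
have aq : a * q = a by rewrite Ha -!mulrA qq.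
have qx : q * x = x by rewrite Hx !mulrA qq.
have xp : x * p = x by rewrite Hx -!mulrA pp.
have pb : p * b = b by rewrite Hb !mulrA pp.
have bp : b * p = b by rewrite Hb -!mulrA pp.
have ra : r * a = 0 by rewrite -pa mulrA rp mul0r.
have ar : a * r = 0 by rewrite -aq -mulrA qr mulr0.
have rx : r * x = 0 by rewrite -qx mulrA rq mul0r.
have xr : x * r = 0 by rewrite -xp -mulrA pr mulr0.
have rb : r * b = 0 by rewrite -pb mulrA rp mul0r.
have br : b * r = 0 by rewrite -bp -mulrA pr mulr0.
have [y' [z' [Hy [Hz Heq]]]] : exists y z : A,
   y = (p + r) * y * (q + r) /\ z = (q + r) * z * (p + r) /\
   (a + r + b * y) * z = p + r.
  apply: (H (a + r) (x + r) b).
  - by rewrite !mulrDl !mulrDr ?mulrA ?(pa,aq,qx,xp,pb,bp,ra,ar,rx,xr,rb,br,pp,qq,rr,pr,rp,qr,rq,mul0r,mulr0,addr0,add0r).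
  - by rewrite !mulrDl !mulrDr ?mulrA ?(pa,aq,qx,xp,pb,bp,ra,ar,rx,xr,rb,br,pp,qq,rr,pr,rp,qr,rq,mul0r,mulr0,addr0,add0r).
  - by rewrite !mulrDl !mulrDr ?mulrA ?(pa,aq,qx,xp,pb,bp,ra,ar,rx,xr,rb,br,pp,qq,rr,pr,rp,qr,rq,mul0r,mulr0,addr0,add0r).
  - by rewrite mulrDl !mulrDr ar rx rr !addr0 ?add0r -addrA [r + b]addrC addrA Hab.
have rz : r * z' = r.
  have := congr1 (fun t => r * t) Heq => /=.
  by rewrite mulrA !mulrDr mulrA ra rr rb mul0r add0r addr0 rp add0r.
have ff : (q + r) * (q + r) = q + r by rewrite mulrDl !mulrDr qq qr rq rr addr0 add0r.
have yr : y' * (q + r) = y' by rewrite {1}Hy -mulrA ff -Hy.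
exists (p * y' * q), (q * z' * p); split; first by rewrite !mulrA pp -!mulrA qq.
split; first by rewrite !mulrA qq -!mulrA pp.
have key : p * ((a + r + b * y') * z') * p = p.
  by rewrite Heq mulrDr mulrDl pp pr mul0r addr0 pp.
have L : p * ((a + r + b * y') * z') * p = a * z' * p + b * y' * z' * p.
  by rewrite !mulrA !mulrDr !mulrDl !mulrA pa pr pb !mul0r addr0.
have M : b * y' * z' * p = b * y' * q * z' * p.
  rewrite -{1}yr mulrDr mulrDr !mulrDl !mulrA -(mulrA (b * y') r z') rz.
  by rewrite -(mulrA (b * y') r p) rp mulr0 ?mul0r addr0.
by rewrite mulrDl !mulrA aq bp -(mulrA (b * y') q q) qq -M -L key.
Qed.
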